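(* Let $\varepsilon\in(0,1/256]$. For every $\hat x\in Q_1$ there exist $\tau\in\Gamma$ and $\rho\in\{1,\dots,\lceil1/\varepsilon\rceil\}^{|\tau|}$ such that $\hat x\in P(\mathcal S(\tau),\rho)$.
   Context: Minimum Knapsack data: $n$ items with costs $c\in\mathbb{R}^n_{\ge0}$, weights $w\in\mathbb{R}^n_{\ge0}$, target $b$; items are indexed so that $1=c_1\ge c_2\ge\dots\ge c_n$. $Q=\{x\in\{0,1\}^n:w^Tx\ge b\}$ and $Q_1=\{x\in Q: x_1=1\}$. $C_\varepsilon=\lceil\log_{1+\varepsilon}(1/\varepsilon)\rceil$. $\Gamma$ is the set of integer vectors $\tau=(\tau_1,\dots,\tau_K)\in\mathbb{Z}_{\ge0}^K$ with $0\le K=|\tau|\le\lceil2\sqrt{C_\varepsilon}\rceil$, $\tau_k+k\le\tau_{k+1}$ for $k\in[K-1]$, and $\tau_K\le C_\varepsilon-1$. For $\tau\in\Gamma$, $\mathcal S(\tau)=\{S_1,\dots,S_K,S_\infty\}$ where $S_k=\{i\in\{2,\dots,n\}:(1+\varepsilon)^{-\tau_k}\ge c_i>(1+\varepsilon)^{-\min\{\tau_k+k,C_\varepsilon\}}\}$ for $k\in[K]$, and $S_\infty=\{i\in\{2,\dots,n\}: c_i\le(1+\varepsilon)^{-C_\varepsilon}\text{ and } c_i<\min_{l\in S_K}c_l\}$ (the second condition omitted if $K=0$). For $\rho\in\{1,\dots,\lceil1/\varepsilon\rceil\}^K$, $P(\mathcal S,\rho)$ is the set of $x\in\mathbb{R}^n$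 with: $x_1=1$; $w^Tx\ge b$; $\sum_{i\in S_k}x_i=\rho_k$ for $k\in[K]$ with $\rho_k<\lceil1/\varepsilon\rceil$; $\sum_{i\in S_k}x_i\ge\rho_k$ for $k\in[K]$ with $\rho_k=\lceil1/\varepsilon\rceil$; $x_i=0$ for $i\in\{2,\dots,n\}\setminus\bigcup_{k\in[K]\cup\{\infty\}}S_k$; $0\le x_i\le1$ for $i\in\bigcup_{k\in[K]\cup\{\infty\}}S_k$. *)

(* Defs.v *)
(* classical reals. Items are indexed 1..n; vectors are nat -> R
   (only the values at 1..n matter). *)
From Stdlib Require Import Reals Lra Lia Arith List.
Open Scope R_scope.

Fixpoint rsum (n : nat) (f : nat -> R) : R :=
  match n with
  | O => 0
  | S m => rsum m f + f (S m)
  end.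

Definition Rceil (x : R) : Z := (- Int_part (- x))%Z.

Definition Ceps (eps : R) : nat := Z.to_nat (Rceil (ln (/ eps) / ln (1 + eps))).

Definition Reps (eps : R) : nat := Z.to_nat (Rceil (/ eps)).

Definition Kmax (eps : R) : nat := Z.to_nat (Rceil (2 * sqrt (INR (Ceps eps)))).

Definition at1 (l : list nat) (k : nat) : nat := nth (k - 1) l 0%nat.

Definition in_Gamma (eps : R) (tau : list nat) : Prop :=
  (length tau <= Kmax eps)%nat /\
  (forall k, (1 <= k)%nat -> (k + 1 <= length tau)%nat ->
     (at1 tau k + k <= at1 tau (k + 1))%nat) /\
  ((0 < length tau)%nat -> (at1 tau (length tau) + 1 <= Ceps eps)%nat).

Definition inSk (n : nat) (c : nat -> R) (eps : R) (tau : list nat) (k i : nat) : bool :=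
  (Nat.leb 2 i) && (Nat.leb i n) &&
  (if Rle_dec (c i) (/ (1 + eps) ^ (at1 tau k)) then true else false) &&
  (if Rlt_dec (/ (1 + eps) ^ (Nat.min (at1 tau k + k) (Ceps eps))) (c i)
   then true else false).

(* i in S_infinity; when K > 0 the condition c_i < min_{l in S_K} c_l
   (vacuous if S_K is empty, min over the empty set = +infinity) *)
Definition inSinf (n : nat) (c : nat -> R) (eps : R) (tau : list nat) (i : nat) : Prop :=
  (2 <= i <= n)%nat /\
  c i <= / (1 + eps) ^ (Ceps eps) /\
  ((0 < length tau)%nat ->
     forall l, inSk n c eps tau (length tau) l = true -> c i < c l).

Definition inUnion (n : nat) (c : nat -> R) (eps : R) (tau : list nat) (i : nat) : Prop :=
  (exists k, (1 <= k <= length tau)%nat /\ inSk n c eps tau k i = true) \/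
  inSinf n c eps tau i.

Definition inP (n : nat) (c w : nat -> R) (b eps : R) (tau rho : list nat)
    (x : nat -> R) : Prop :=
  x 1%nat = 1 /\
  rsum n (fun i => w i * x i) >= b /\
  (forall k, (1 <= k <= length tau)%nat ->
     let s := rsum n (fun i => if inSk n c eps tau k i then x i else 0) in
     ((at1 rho k < Reps eps)%nat -> s = INR (at1 rho k)) /\
     (at1 rho k = Reps eps -> s >= INR (at1 rho k))) /\
  (forall i, (2 <= i <= n)%nat -> ~ inUnion n c eps tau i -> x i = 0) /\
  (forall i, (2 <= i <= n)%nat -> inUnion n c eps tau i -> 0 <= x i <= 1).

Definition inQ1 (n : nat) (w : nat -> R) (b : R) (x : nat -> R) : Prop :=
  (forall i, (1 <= i <= n)%nat -> x i = 0 \/ x i = 1) /\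
  rsum n (fun i => w i * x i) >= b /\
  x 1%nat = 1.

(* Main.v *)
Require Import Defs.
From Stdlib Require Import Reals List Lra Lia Arith Bool.
Open Scope R_scope.
Open Scope bool_scope.
Open Scope R_scope.

Fixpoint good (D : nat -> bool) (C s k : nat) (L : list nat) : Prop :=
 match L with
 | nil => forall j, (s <= j < C)%nat -> D j = false
 | t :: L' => (s <= t < C)%nat /\ D t = true /\
     (forall j, (s <= j < t)%nat -> D j = false) /\ good D C (t + k) (S k) L'
 end.

Lemma find_first (D : nat -> bool) s N :
  (forall j, (s <= j < s + N)%nat -> D j = false) \/
  exists t, (s <= t < s + N)%nat /\ D t = true /\ forall j, (s <= j < t)%nat -> D j = false.
Proof.
  induction N as [|N IH].
  - left; intros; exfalso; lia.
  - destruct IH as [H|[t [Ht1 [Ht2 Ht3]]]].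
    + destruct (D (s + N)%nat) eqn:E.
      * right. exists (s+N)%nat. split; [lia|]. split; auto.
      * left. intros j Hj. destruct (Nat.eq_dec j (s+N)) as [->|]; auto. apply H; lia.
    + right. exists t. split; [lia|auto].
Qed.

Lemma good_exists D C : forall d s k, (1 <= k)%nat -> (C - s <= d)%nat ->
  exists L, good D C s k L.
Proof.
  induction d as [|d IH]; intros s k Hk Hd.
  - exists nil. simpl. intros; exfalso; lia.
  - destruct (find_first D s (C - s)) as [H|[t [Ht1 [Ht2 Ht3]]]].
    + exists nil. simpl. intros j Hj. apply H. lia.
    + destruct (IH (t + k)%nat (S k)) as [L HL]; try lia.
      exists (t :: L). simpl. repeat split; auto; lia.
Qed.

Lemma good_a D C : forall L s k, good D C s k L ->
  forall p, (p < length L)%nat -> (nth p L 0%nat < C)%nat /\ D (nth p L 0%nat) = true.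
Proof.
  induction L as [|t L IH]; intros s k H p Hp; simpl in *.
  - lia.
  - destruct H as [H1 [H2 [H3 H4]]]. destruct p as [|p].
    + split; [lia|auto].
    + apply (IH _ _ H4). lia.
Qed.

Lemma good_b D C : forall L s k, good D C s k L ->
  forall j, (s <= j < C)%nat -> D j = true ->
  exists p, (p < length L)%nat /\ (nth p L 0%nat <= j < nth p L 0%nat + (p + k))%nat.
Proof.
  induction L as [|t L IH]; intros s k H j Hj Dj; simpl in *.
  - rewrite H in Dj; [discriminate|lia].
  - destruct H as [H1 [H2 [H3 H4]]].
    destruct (Nat.lt_ge_cases j t) as [Hlt|Hge].
    + rewrite H3 in Dj; [discriminate|lia].
    + destruct (Nat.lt_ge_cases j (t + k)) as [Hlt2|Hge2].
      * exists 0%nat. split; lia.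
      * destruct (IH _ _ H4 j) as [p [Hp1 Hp2]]; auto; try lia.
        exists (S p). split; lia.
Qed.

Lemma good_s D C : forall L s k, good D C s k L -> forall p, (p < length L)%nat ->
  (s <= nth p L 0%nat)%nat.
Proof.
  induction L as [|t L IH]; intros s k H p Hp; simpl in *.
  - lia.
  - destruct H as [H1 [H2 [H3 H4]]]. destruct p as [|p]; [lia|].
    specialize (IH _ _ H4 p ltac:(lia)). lia.
Qed.

Lemma good_c D C : forall L s k, good D C s k L ->
  forall p, (S p < length L)%nat -> (nth p L 0%nat + (p + k) <= nth (S p) L 0%nat)%nat.
Proof.
  induction L as [|t L IH]; intros s k H p Hp; simpl in *.
  - lia.
  - destruct H as [H1 [H2 [H3 H4]]]. destruct p as [|p].
    + pose proof (good_s D C L _ _ H4 0 ltac:(lia)). simpl in *. lia.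
    + specialize (IH _ _ H4 p ltac:(lia)). lia.
Qed.

Lemma good_d D C : forall L s k, good D C s k L -> forall p, (p < length L)%nat ->
  (2 * s + p * (2 * k + p) <= 2 * nth p L 0%nat + p)%nat.
Proof.
  induction L as [|t L IH]; intros s k H p Hp; simpl in *.
  - lia.
  - destruct H as [H1 [H2 [H3 H4]]]. destruct p as [|p]; [lia|].
    specialize (IH _ _ H4 p ltac:(lia)). nia.
Qed.

Lemma r_anti (eps : R) m m' : 0 < eps -> (m <= m')%nat ->
  / (1 + eps) ^ m' <= / (1 + eps) ^ m.
Proof.
  intros He Hm. apply Rinv_le_contravar.
  - apply pow_lt; lra.
  - apply Rle_pow; [lra|auto].
Qed.

Lemma class_exists (a : nat -> R) (x : R) N : x <= a 0%nat -> a N < x ->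
  exists j, (j < N)%nat /\ a (S j) < x /\ x <= a j.
Proof.
  induction N as [|N IH]; intros H0 HN.
  - lra.
  - destruct (Rle_dec x (a N)) as [H|H].
    + exists N. split; [lia|]. split; auto.
    + destruct IH as [j Hj]; auto. lra. exists j. split; [lia| tauto].
Qed.

Fixpoint ncount (n : nat) (f : nat -> bool) : nat :=
  match n with O => O | S m => (ncount m f + (if f (S m) then 1 else 0))%nat end.

Definition isone (r : R) : bool := if Req_EM_T r 1 then true else false.

Lemma isone_true r : isone r = true -> r = 1.
Proof. unfold isone. destruct (Req_EM_T r 1); auto; discriminate. Qed.

Lemma isone_1 : isone 1 = true.
Proof. unfold isone. destruct (Req_EM_T 1 1); auto. Qed.

Lemma rsum_count n (g : nat -> bool) (x : nat -> R) :
  (forall i, (1 <= i <= n)%nat -> x i = 0 \/ x i = 1) ->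
  rsum n (fun i => if g i then x i else 0) = INR (ncount n (fun i => g i && isone (x i))).
Proof.
  induction n as [|n IH]; intros Hx; cbn [rsum ncount].
  - reflexivity.
  - rewrite IH by (intros; apply Hx; lia).
    rewrite plus_INR. f_equal.
    destruct (g (S n)); cbn [andb].
    + unfold isone. destruct (Req_EM_T (x (S n)) 1) as [E|E].
      * rewrite E; reflexivity.
      * destruct (Hx (S n)) as [H|H]; [lia| rewrite H; reflexivity | contradiction].
    + reflexivity.
Qed.

Lemma ncount_pos n f i : (1 <= i <= n)%nat -> f i = true -> (1 <= ncount n f)%nat.
Proof.
  induction n as [|n IH]; intros Hi Hf; cbn [ncount].
  - lia.
  - destruct (Nat.eq_dec i (S n)) as [->|Hne].
    + rewrite Hf. lia.
    + specialize (IH ltac:(lia) Hf). lia.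
Qed.

Lemma Rceil_ge (x : R) (K : nat) : INR K <= x -> (K <= Z.to_nat (Rceil x))%nat.
Proof.
  intros H. unfold Rceil, Int_part.
  destruct (archimed (-x)) as [H1 H2].
  assert (Hz: (up (-x) <= 1 - Z.of_nat K)%Z).
  { apply le_IZR. rewrite minus_IZR, <- INR_IZR_INZ. simpl (IZR 1). lra. }
  lia.
Qed.

Lemma sqrt_bound (K C : nat) : (K * K <= 4 * C)%nat -> INR K <= 2 * sqrt (INR C).
Proof.
  intros H. apply le_INR in H. rewrite !mult_INR in H.
  assert (Hs := sqrt_le_1_alt _ _ H).
  rewrite sqrt_square in Hs by apply pos_INR.
  replace (INR 4) with (2 * 2) in Hs by (simpl; lra).
  rewrite sqrt_mult_alt in Hs by lra.
  rewrite sqrt_square in Hs by lra. exact Hs.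
Qed.

Lemma at1_S L p : at1 L (S p) = nth p L 0%nat.
Proof. unfold at1. f_equal. lia. Qed.

Lemma at1_map_seq (f : nat -> nat) K k : (1 <= k <= K)%nat ->
  at1 (map f (seq 1 K)) k = f k.
Proof.
  intros Hk. unfold at1.
  rewrite nth_indep with (d' := f 0%nat) by (rewrite length_map, length_seq; lia).
  rewrite map_nth, seq_nth by lia. f_equal; lia.
Qed.

Lemma c_le1 n c (Hc1 : c 1%nat = 1)
  (Hcmono : forall i, (1 <= i)%nat -> (i < n)%nat -> c (S i) <= c i) :
  forall i, (1 <= i <= n)%nat -> c i <= 1.
Proof.
  induction i as [|i IH]; intros Hi; [lia|].
  destruct (Nat.eq_dec i 0) as [->|Hne]; [lra|].
  specialize (Hcmono i ltac:(lia) ltac:(lia)). specialize (IH ltac:(lia)). lra.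
Qed.

Lemma inSk_intro n c eps tau k i : (2 <= i <= n)%nat ->
  c i <= / (1 + eps) ^ (at1 tau k) ->
  / (1 + eps) ^ (Nat.min (at1 tau k + k) (Ceps eps)) < c i ->
  inSk n c eps tau k i = true.
Proof.
  intros Hi H1 H2. unfold inSk.
  rewrite (proj2 (Nat.leb_le 2 i)) by lia. rewrite (proj2 (Nat.leb_le i n)) by lia.
  destruct (Rle_dec _ _); [|contradiction].
  destruct (Rlt_dec _ _); [|contradiction]. reflexivity.
Qed.

Lemma inSk_lower n c eps tau k l : inSk n c eps tau k l = true ->
  / (1 + eps) ^ (Nat.min (at1 tau k + k) (Ceps eps)) < c l.
Proof.
  unfold inSk. destruct (Rlt_dec _ _); auto.
  rewrite andb_false_r. discriminate.
Qed.

Definition cls (c : nat -> R) (eps : R) (i j : nat) : bool :=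
  (if Rle_dec (c i) (/ (1 + eps) ^ j) then true else false) &&
  (if Rlt_dec (/ (1 + eps) ^ (S j)) (c i) then true else false).

Lemma cls_true c eps i j : cls c eps i j = true <->
  c i <= / (1 + eps) ^ j /\ / (1 + eps) ^ (S j) < c i.
Proof.
  unfold cls. destruct (Rle_dec _ _); destruct (Rlt_dec _ _); simpl;
  split; intros H; try discriminate; try tauto; auto.
Qed.

Theorem lemma5 (n : nat) (c w : nat -> R) (b eps : R)
  (Heps : 0 < eps <= 1 / 256)
  (Hn : (1 <= n)%nat)
  (Hc1 : c 1%nat = 1)
  (Hcmono : forall i, (1 <= i)%nat -> (i < n)%nat -> c (S i) <= c i)
  (Hcnn : forall i, (1 <= i <= n)%nat -> 0 <= c i)
  (Hwnn : forall i, (1 <= i <= n)%nat -> 0 <= w i) :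
  forall xh : nat -> R, inQ1 n w b xh ->
  exists (tau rho : list nat),
    in_Gamma eps tau /\
    length rho = length tau /\
    (forall k, (1 <= k <= length rho)%nat -> (1 <= at1 rho k <= Reps eps)%nat) /\
    inP n c w b eps tau rho xh.
Proof.
  intros xh [Hbin [Hsum Hx1]].
  set (C := Ceps eps).
  set (D := fun j => existsb (fun i => isone (xh i) && cls c eps i j) (seq 2 (n - 1))).
  destruct (good_exists D C C 0 1 ltac:(lia) ltac:(lia)) as [L HL].
  pose (cnt := fun k => ncount n (fun i => inSk n c eps L k i && isone (xh i))).
  pose (R0 := Reps eps).
  assert (HR0 : (1 <= R0)%nat).
  { apply Rceil_ge. simpl. rewrite <- Rinv_1. apply Rinv_le_contravar; lra. }
  assert (Hne : forall k, (1 <= k <= length L)%nat -> (1 <= cnt k)%nat).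
  { intros k Hk. destruct k as [|p]; [lia|].
    destruct (good_a D C L 0 1 HL p ltac:(lia)) as [Ht Dt].
    unfold D in Dt. apply existsb_exists in Dt.
    destruct Dt as [i [Hin Hi]]. apply in_seq in Hin.
    apply andb_prop in Hi. destruct Hi as [Hi1 Hi2].
    apply isone_true in Hi1. apply cls_true in Hi2. destruct Hi2 as [Hc Hc'].
    apply (ncount_pos n _ i); [lia|].
    rewrite Hi1, isone_1, andb_true_r.
    apply inSk_intro; [lia| |].
    - rewrite at1_S. exact Hc.
    - rewrite at1_S. eapply Rle_lt_trans; [|exact Hc'].
      apply r_anti; [lra|]. fold C. lia. }
  assert (Hcov : forall i, (2 <= i <= n)%nat -> xh i = 1 -> inUnion n c eps L i).
  { intros i Hi Hxi.
    destruct (Rle_dec (c i) (/ (1 + eps) ^ C)) as [Hsmall|Hlarge].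
    - right. split; [lia|]. split; [exact Hsmall|].
      intros _ l Hl. apply inSk_lower in Hl.
      eapply Rle_lt_trans; [exact Hsmall|]. eapply Rle_lt_trans; [|exact Hl].
      apply r_anti; [lra|]. fold C. lia.
    - apply Rnot_le_lt in Hlarge.
      destruct (class_exists (fun j => / (1 + eps) ^ j) (c i) C) as [j [Hj1 [Hj2 Hj3]]].
      + simpl. rewrite Rinv_1. apply (c_le1 n c Hc1 Hcmono). lia.
      + exact Hlarge.
      + assert (Dj : D j = true).
        { unfold D. apply existsb_exists. exists i. split.
          - apply in_seq. lia.
          - rewrite Hxi, isone_1. simpl. apply cls_true. split; auto. }
        destruct (good_b D C L 0 1 HL j ltac:(lia) Dj) as [p [Hp1 Hp2]].
        left. exists (S p). split; [lia|].
        apply inSk_intro; [lia| |].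
        * rewrite at1_S. eapply Rle_trans; [exact Hj3|]. apply r_anti; [lra|lia].
        * rewrite at1_S. eapply Rle_lt_trans; [|exact Hj2].
          apply r_anti; [lra|]. fold C. lia. }
  exists L, (map (fun k => Nat.min (cnt k) R0) (seq 1 (length L))).
  split; [|split; [|split]].
  -
    split; [|split].
    + destruct (length L) as [|p] eqn:EL; [lia|].
      unfold Kmax. apply Rceil_ge. fold C. apply sqrt_bound.
      pose proof (good_d D C L 0 1 HL p ltac:(lia)).
      pose proof (good_a D C L 0 1 HL p ltac:(lia)) as [Ha _].
      nia.
    + intros k Hk1 Hk2. destruct k as [|p]; [lia|].
      replace (S p + 1)%nat with (S (S p)) by lia.
      rewrite !at1_S. pose proof (good_c D C L 0 1 HL p ltac:(lia)). lia.
    + intros Hpos. destruct (length L) as [|p] eqn:EL; [lia|].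
      rewrite at1_S. pose proof (good_a D C L 0 1 HL p ltac:(lia)) as [Ha _].
      fold C. lia.
  - rewrite length_map, length_seq. reflexivity.
  - intros k Hk. rewrite length_map, length_seq in Hk.
    rewrite at1_map_seq by lia. specialize (Hne k Hk). lia.
  - split; [exact Hx1|]. split; [exact Hsum|]. split; [|split].
    + intros k Hk. cbv zeta.
      rewrite (rsum_count n (inSk n c eps L k) xh Hbin).
      rewrite at1_map_seq by lia. fold (cnt k). fold R0.
      specialize (Hne k Hk). split.
      * intros Hlt. f_equal. lia.
      * intros Heq. apply Rle_ge. apply le_INR. lia.
    + intros i Hi Hnot. destruct (Hbin i ltac:(lia)) as [H|H]; auto.
      exfalso. apply Hnot. apply Hcov; auto.
    + intros i Hi _. destruct (Hbin i ltac:(lia)) as [H|H]; rewrite H; lra.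
Qed.
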